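(* Let $d\ge 2$, $2\le k\le d+1$, and let $y_1,\dots,y_N\in\{1,\dots,k\}$ be labels of a class-balanced dataset (each class has exactly $N/k\ge1$ samples). For $\boldsymbol w_1,\dots,\boldsymbol w_k,\boldsymbol z_1,\dots,\boldsymbol z_N\in\mathbb S^{d-1}$ define the sample margin regularization risk $$R=\frac1N\sum_{i=1}^N\Big(-\boldsymbol w_{y_i}^{\mathrm T}\boldsymbol z_i+\max_{j\ne y_i}\boldsymbol w_j^{\mathrm T}\boldsymbol z_i\Big).$$ Then $R\ge-\frac{k}{k-1}$, with equality if and only if $\boldsymbol w_i^{\mathrm T}\boldsymbol w_j=-\frac1{k-1}$ for all $i\ne j$ and $\boldsymbol z_i=\boldsymbol w_{y_i}$ for all $i$. Consequently minimizing $R$ yields the largest possible class margin $\arccos\frac{-1}{k-1}$ and the largest possible minimal sample margin $\frac{k}{k-1}$.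
   Context: $\mathbb S^{d-1}$ is the unit sphere in $\mathbb R^d$. Class margin: $m_c(\{\boldsymbol w_i\})=\arccos\big[\max_{i\ne j}\boldsymbol w_i^{\mathrm T}\boldsymbol w_j\big]$ for unit prototypes. Minimal sample margin: $\gamma_{\min}=\min_i\big(\boldsymbol w_{y_i}^{\mathrm T}\boldsymbol z_i-\max_{j\ne y_i}\boldsymbol w_j^{\mathrm T}\boldsymbol z_i\big)$. *)

(* Defs.v *)
From mathcomp Require Import all_boot all_order all_algebra.
From mathcomp Require Import all_classical all_reals all_analysis.
Set Implicit Arguments. Unset Strict Implicit. Unset Printing Implicit Defensive.
Import Order.TTheory GRing.Theory Num.Theory.
Local Open Scope ring_scope.

Section Defs.
Variable R : realType.

Definition dotp (d : nat) (u v : 'rV[R]_d) : R := \sum_(i < d) u 0 i * v 0 i.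

Definition on_sphere (d : nat) (u : 'rV[R]_d) : Prop := dotp u u = 1.

(* maximum / minimum of a (nonempty) finite list of reals;
   the seed is the head of the list, so for a nonempty list this is
   exactly the maximum (resp. minimum) of its elements *)
Definition maxseq (s : seq R) : R := \big[Num.max/head 0 s]_(x <- s) x.
Definition minseq (s : seq R) : R := \big[Num.min/head 0 s]_(x <- s) x.

Definition max_except (k : nat) (c : 'I_k) (f : 'I_k -> R) : R :=
  maxseq [seq f j | j <- enum 'I_k & j != c].

Definition sm_risk (d k N : nat) (y : 'I_N -> 'I_k)
  (w : 'I_k -> 'rV[R]_d) (z : 'I_N -> 'rV[R]_d) : R :=
  N%:R^-1 * \sum_(i < N)
    (- dotp (w (y i)) (z i) + max_except (y i) (fun j => dotp (w j) (z i))).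

Definition class_margin (d k : nat) (w : 'I_k -> 'rV[R]_d) : R :=
  acos (maxseq [seq dotp (w p.1) (w p.2) | p <- enum [pred q : 'I_k * 'I_k | q.1 != q.2]]).

Definition min_sample_margin (d k N : nat) (y : 'I_N -> 'I_k)
  (w : 'I_k -> 'rV[R]_d) (z : 'I_N -> 'rV[R]_d) : R :=
  minseq [seq dotp (w (y i)) (z i) - max_except (y i) (fun j => dotp (w j) (z i))
         | i <- enum 'I_N].

Definition class_balanced (k N : nat) (y : 'I_N -> 'I_k) : Prop :=
  exists m : nat, (0 < m)%N /\ forall c : 'I_k, #|[set i | y i == c]| = m.

End Defs.

(* Main.v *)
Require Import Defs.
From mathcomp Require Import all_boot all_order all_algebra.
From mathcomp Require Import all_classical all_reals all_analysis.
From mathcomp Require Import ring lra.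
Import Order.TTheory GRing.Theory Num.Theory.
Local Open Scope ring_scope.
Set Implicit Arguments. Unset Strict Implicit. Unset Printing Implicit Defensive.
Section S.
Variable R : realType.
Implicit Types (d : nat).

Lemma dotpC d (u v : 'rV[R]_d) : dotp u v = dotp v u.
Proof. by apply: eq_bigr => i _; rewrite mulrC. Qed.

Lemma dotpDl d (u v x : 'rV[R]_d) : dotp (u + v) x = dotp u x + dotp v x.
Proof. by rewrite /dotp -big_split; apply: eq_bigr => i _; rewrite !mxE mulrDl. Qed.

Lemma dotpZl d (a : R) (u x : 'rV[R]_d) : dotp (a *: u) x = a * dotp u x.
Proof. by rewrite /dotp mulr_sumr; apply: eq_bigr => i _; rewrite !mxE mulrA. Qed.

Lemma dotpNl d (u x : 'rV[R]_d) : dotp (- u) x = - dotp u x.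
Proof. by rewrite -scaleN1r dotpZl mulN1r. Qed.

Lemma dotpBl d (u v x : 'rV[R]_d) : dotp (u - v) x = dotp u x - dotp v x.
Proof. by rewrite dotpDl dotpNl. Qed.

Lemma dotpDr d (u v x : 'rV[R]_d) : dotp x (u + v) = dotp x u + dotp x v.
Proof. by rewrite dotpC dotpDl !(dotpC x). Qed.

Lemma dotpZr d (a : R) (u x : 'rV[R]_d) : dotp x (a *: u) = a * dotp x u.
Proof. by rewrite dotpC dotpZl dotpC. Qed.

Lemma dotpNr d (u x : 'rV[R]_d) : dotp x (- u) = - dotp x u.
Proof. by rewrite dotpC dotpNl dotpC. Qed.

Lemma dotpBr d (u v x : 'rV[R]_d) : dotp x (u - v) = dotp x u - dotp x v.
Proof. by rewrite dotpC dotpBl !(dotpC x). Qed.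

Lemma dotp_suml d (I : finType) (P : pred I) (F : I -> 'rV[R]_d) x :
  dotp (\sum_(i | P i) F i) x = \sum_(i | P i) dotp (F i) x.
Proof.
elim/big_rec2: _ => [|i y1 y2 _ <-]; last by rewrite dotpDl.
by rewrite /dotp big1 // => j _; rewrite mxE mul0r.
Qed.

Lemma dotp_ge0 d (u : 'rV[R]_d) : 0 <= dotp u u.
Proof. by apply: sumr_ge0 => i _; rewrite -expr2 sqr_ge0. Qed.

Lemma dotp_eq0 d (u : 'rV[R]_d) : dotp u u = 0 -> u = 0.
Proof.
move=> H; apply/rowP => i; rewrite mxE.
have hF : forall j : 'I_d, predT j -> 0 <= u 0 j * u 0 j by move=> j _; rewrite -expr2 sqr_ge0.
have /= h := psumr_eq0P hF H (i := i) isT.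
by move/eqP: h; rewrite mulf_eq0 orbb => /eqP.
Qed.

Lemma dotp_unit_bound d (u v : 'rV[R]_d) : dotp u u = 1 -> dotp v v = 1 ->
  -1 <= dotp u v <= 1.
Proof.
move=> hu hv.
have h1 := dotp_ge0 (u + v); have h2 := dotp_ge0 (u - v).
rewrite !dotpDl !dotpDr in h1; rewrite !dotpBl !dotpBr in h2.
rewrite hu hv (dotpC v u) in h1 h2.
apply/andP; split; lra.
Qed.

Lemma bigmax_ge (x0 : R) (s : seq R) x : x \in s -> x <= \big[Num.max/x0]_(y <- s) y.
Proof.
elim: s => // a s IH; rewrite inE big_cons => /orP [/eqP ->|/IH h].
  by rewrite le_max lexx.
by rewrite le_max h orbT.
Qed.

Lemma bigmax_mem (x0 : R) (s : seq R) : \big[Num.max/x0]_(y <- s) y \in x0 :: s.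
Proof.
elim: s => [|a s IH]; first by rewrite big_nil inE eqxx.
rewrite big_cons; case: (leP a (\big[Num.max/x0]_(y <- s) y)) => _.
  by move: IH; rewrite !inE => /orP [->|->]; rewrite ?orbT.
by rewrite !inE eqxx orbT.
Qed.

Lemma bigmin_le (x0 : R) (s : seq R) x : x \in s -> \big[Num.min/x0]_(y <- s) y <= x.
Proof.
elim: s => // a s IH; rewrite inE big_cons => /orP [/eqP ->|/IH h].
  by rewrite ge_min lexx.
by rewrite ge_min h orbT.
Qed.

Lemma bigmin_mem (x0 : R) (s : seq R) : \big[Num.min/x0]_(y <- s) y \in x0 :: s.
Proof.
elim: s => [|a s IH]; first by rewrite big_nil inE eqxx.
rewrite big_cons; case: (leP a (\big[Num.min/x0]_(y <- s) y)) => _.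
  by rewrite !inE eqxx orbT.
by move: IH; rewrite !inE => /orP [->|->]; rewrite ?orbT.
Qed.

Lemma maxseq_ge (s : seq R) x : x \in s -> x <= maxseq s.
Proof. exact: bigmax_ge. Qed.

Lemma maxseq_mem (s : seq R) : s != [::] -> maxseq s \in s.
Proof.
case: s => // a s _; have := bigmax_mem a (a :: s); rewrite /maxseq /=.
by rewrite inE => /orP [/eqP ->|//]; rewrite inE eqxx.
Qed.

Lemma minseq_le (s : seq R) x : x \in s -> minseq s <= x.
Proof. exact: bigmin_le. Qed.

Lemma minseq_mem (s : seq R) : s != [::] -> minseq s \in s.
Proof.
case: s => // a s _; have := bigmin_mem a (a :: s); rewrite /minseq /=.
by rewrite inE => /orP [/eqP ->|//]; rewrite inE eqxx.
Qed.

Lemma acos_le (a b : R) : -1 <= a -> a <= b -> b <= 1 -> acos b <= acos a.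
Proof.
move=> ha hab hb.
have ia : -1 <= a <= 1 by apply/andP; split => //; apply: le_trans hb.
have ib : -1 <= b <= 1 by apply/andP; split => //; apply: le_trans hab.
have [/andP[a0 api] ca] := acos_def ia.
have [/andP[b0 bpi] cb] := acos_def ib.
rewrite leNgt; apply/negP => lt.
have := @ltr_cos R (acos a) (acos b).
rewrite !in_itv /= a0 api b0 bpi => /(_ isT isT).
rewrite ca cb lt => /idP; rewrite ltNge hab //.
Qed.

End S.
Section S2.
Variable R : realType.

Lemma exists_other k (c : 'I_k) : (1 < k)%N -> exists j : 'I_k, j != c.
Proof.
move=> hk; have : (0 < #|predC1 c|)%N by rewrite cardC1 card_ord; case: k hk c.
by case/card_gt0P => j; rewrite inE => h; exists j.
Qed.

Lemma max_except_ge k (c : 'I_k) (f : 'I_k -> R) j : j != c -> f j <= max_except c f.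
Proof.
move=> hj; apply: maxseq_ge; apply/mapP; exists j => //.
by rewrite mem_filter hj mem_enum.
Qed.

Lemma max_except_mem k (c : 'I_k) (f : 'I_k -> R) : (1 < k)%N ->
  exists2 j, j != c & max_except c f = f j.
Proof.
move=> hk; have [j0 hj0] := exists_other c hk.
have : max_except c f \in [seq f j | j <- enum 'I_k & j != c].
  apply: maxseq_mem; apply/eqP => E.
  have : f j0 \in [seq f j | j <- enum 'I_k & j != c].
    by apply/mapP; exists j0 => //; rewrite mem_filter hj0 mem_enum.
  by rewrite E.
by case/mapP => j; rewrite mem_filter mem_enum andbT => hj ->; exists j.
Qed.

Lemma sum_except_le k (c : 'I_k) (f : 'I_k -> R) :
  \sum_(j | j != c) f j <= (k%:R - 1) * max_except c f.
Proof.
apply: (@le_trans _ _ (\sum_(j | j != c) max_except c f)).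
  by apply: ler_sum => j hj; apply: max_except_ge.
rewrite sumr_const cardC1 card_ord -mulr_natl.
case: k c f => [[]//|k] c f /=.
rewrite mulrSr; lra.
Qed.

Lemma sum_except_eq k (c : 'I_k) (f : 'I_k -> R) :
  \sum_(j | j != c) f j = (k%:R - 1) * max_except c f ->
  forall j, j != c -> f j = max_except c f.
Proof.
move=> E j hj.
have h0 : \sum_(j | j != c) (max_except c f - f j) = 0.
  rewrite sumrB E sumr_const cardC1 card_ord -mulr_natl.
  case: k c f E j hj => [[]//|k] c f E j hj /=.
  rewrite mulrSr; lra.
have hF : forall i, i != c -> 0 <= max_except c f - f i.
  by move=> i hi; rewrite subr_ge0 max_except_ge.
have /= := psumr_eq0P hF h0 hj.
by move=> /eqP; rewrite subr_eq0 => /eqP ->.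
Qed.

Lemma balanced_sum k N (y : 'I_N -> 'I_k) : class_balanced y ->
  exists2 m : nat, (0 < m)%N & forall F : 'I_k -> R,
    \sum_(i < N) F (y i) = m%:R * \sum_(c < k) F c.
Proof.
case=> m [hm hc]; exists m => // F.
rewrite (partition_big y predT) //= mulr_sumr; apply: eq_bigr => c _.
rewrite (eq_bigr (fun _ => F c)); last by move=> i /eqP ->.
by rewrite sumr_const mulr_natl -(hc c) cardsE.
Qed.

End S2.
Section S3.
Variable R : realType.
Variables (d k N : nat) (y : 'I_N -> 'I_k) (w : 'I_k -> 'rV[R]_d) (z : 'I_N -> 'rV[R]_d).
Hypothesis hk : (1 < k)%N.
Hypothesis hw : forall c, on_sphere (w c).
Hypothesis hz : forall i, on_sphere (z i).

Definition K : R := k%:R.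
Definition Wsum := \sum_(c < k) w c.
Definition Vc c := Wsum - K *: w c.
Definition Mi i := max_except (y i) (fun j => dotp (w j) (z i)).
Definition ai i := Mi i - (\sum_(j | j != y i) dotp (w j) (z i)) / (K - 1).
Definition bi i := dotp (Vc (y i) + K *: z i) (Vc (y i) + K *: z i) / (2 * K * (K - 1)).
Definition termi i := - dotp (w (y i)) (z i) + Mi i.

Lemma K_gt1 : 1 < K.
Proof. by rewrite /K ltr1n. Qed.

Lemma K_neq0 : K != 0.
Proof. have := K_gt1 => h; apply/eqP => E; move: h; rewrite E; lra. Qed.

Lemma K1_neq0 : K - 1 != 0.
Proof. have := K_gt1 => h; apply/eqP => E; lra. Qed.

Lemma sum_except_dot c x :
  \sum_(j | j != c) dotp (w j) x = dotp Wsum x - dotp (w c) x.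
Proof. by rewrite /Wsum dotp_suml [X in _ = X - _](bigD1 c) //= addrC addrK. Qed.

Lemma ai_ge0 i : 0 <= ai i.
Proof.
rewrite /ai subr_ge0 ler_pdivrMr; last by have := K_gt1; lra.
rewrite mulrC; exact: sum_except_le.
Qed.

Lemma bi_ge0 i : 0 <= bi i.
Proof.
rewrite /bi divr_ge0 ?dotp_ge0 //; have := K_gt1 => h.
apply: mulr_ge0; [apply: mulr_ge0|]; lra.
Qed.

Lemma termi_eq i : termi i =
  ai i + bi i - (dotp (Vc (y i)) (Vc (y i)) + K ^+ 2) / (2 * K * (K - 1)).
Proof.
rewrite /termi /ai /bi sum_except_dot.
have hzz := hz i; have hww := hw (y i); rewrite /on_sphere in hzz hww.
rewrite !dotpDl !dotpDr !dotpZl !dotpZr hzz.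
rewrite /Vc !dotpNl !dotpNr !dotpZl !dotpZr hww (dotpC (z i)) (dotpC (w (y i)) Wsum) (dotpC (z i)).
have := K_neq0; have := K1_neq0 => h1 h0.
by field; rewrite -/K h0 h1.
Qed.

Lemma sumV : \sum_(c < k) (dotp (Vc c) (Vc c) + K ^+ 2) = 2 * K ^+ 3 - K * dotp Wsum Wsum.
Proof.
have E : forall c, dotp (Vc c) (Vc c) + K ^+ 2 =
   (dotp Wsum Wsum + 2 * K ^+ 2) - 2 * K * dotp (w c) Wsum.
  move=> c; rewrite /Vc !dotpDl !dotpDr !dotpNl !dotpNr !dotpZl !dotpZr.
  have := hw c; rewrite /on_sphere => ->; rewrite (dotpC Wsum (w c)); ring.
rewrite (eq_bigr _ (fun c _ => E c)) sumrB -mulr_sumr -dotp_suml -/Wsum.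
rewrite sumr_const card_ord -mulr_natl -/K; ring.
Qed.

Lemma risk_formula m : (0 < m)%N ->
  (forall F : 'I_k -> R, \sum_(i < N) F (y i) = m%:R * \sum_(c < k) F c) ->
  sm_risk y w z = (\sum_(i < N) (ai i + bi i) + m%:R * dotp Wsum Wsum / (2 * (K - 1)))
     / (m%:R * K) - K / (K - 1).
Proof.
move=> hm hsum.
have hN : N%:R = m%:R * K :> R.
  have := hsum (fun _ => 1); rewrite !sumr_const !card_ord mulr_natl => <-.
  by rewrite -/K.
have hm0 : m%:R != 0 :> R by rewrite pnatr_eq0 -lt0n.
have := K_neq0; have := K1_neq0 => h1 h0.
have -> : sm_risk y w z = N%:R^-1 * \sum_(i < N) termi i by [].
rewrite (eq_bigr _ (fun i _ => termi_eq i)) sumrB -mulr_suml.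
rewrite (hsum (fun c => dotp (Vc c) (Vc c) + K ^+ 2)) sumV hN.
by field; rewrite -/K h0 h1 hm0.
Qed.
Ltac lra' := repeat match goal with H : @eq (matrix _ _ _) _ _ |- _ => clear H | H : forall _, @eq (matrix _ _ _) _ _ |- _ => clear H end; lra.

Lemma dotp0l (x : 'rV[R]_d) : dotp 0 x = 0.
Proof. by rewrite /dotp big1 // => j _; rewrite mxE mul0r. Qed.

Lemma sum_except_const (c : 'I_k) (x : R) : \sum_(j | j != c) x = (K - 1) * x.
Proof.
rewrite sumr_const cardC1 card_ord -mulr_natl /K.
by case: (k) c => [[]//|k'] c /=; rewrite mulrSr addrK.
Qed.

Definition simplex := forall i j : 'I_k, i != j -> dotp (w i) (w j) = - (1 / (K - 1)).

Lemma Mi_simplex s : simplex -> z s = w (y s) -> Mi s = - (1 / (K - 1)).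
Proof.
move=> hs hzs; rewrite /Mi; have [j hj ->] := max_except_mem (y s) (fun j => dotp (w j) (z s)) hk.
by rewrite hzs hs.
Qed.

Lemma Wsum_simplex : simplex -> Wsum = 0.
Proof.
move=> hs; apply: dotp_eq0.
have h : forall c, dotp Wsum (w c) = 0.
  move=> c; have := sum_except_dot c (w c).
  rewrite (eq_bigr (fun _ => - (1 / (K - 1)))); last by move=> j hj; rewrite hs.
  rewrite sum_except_const; have := hw c; rewrite /on_sphere => ->.
  have := K1_neq0 => h1 E.
  have : dotp Wsum (w c) = (K - 1) * - (1 / (K - 1)) + 1 by rewrite E; ring.
  by move=> ->; field.
rewrite {1}/Wsum dotp_suml big1 // => c _; by rewrite dotpC h.
Qed.

Lemma risk_eq_of m : (0 < m)%N ->
  (forall F : 'I_k -> R, \sum_(i < N) F (y i) = m%:R * \sum_(c < k) F c) ->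
  simplex -> (forall s, z s = w (y s)) -> sm_risk y w z = - (K / (K - 1)).
Proof.
move=> hm hsum hs hzs.
rewrite (risk_formula hm hsum) (Wsum_simplex hs) dotp0l mulr0 mul0r addr0.
rewrite big1 ?mul0r ?sub0r // => s _.
have h0 : bi s = 0.
  rewrite /bi /Vc (Wsum_simplex hs) hzs sub0r addrC subrr dotp0l; by rewrite mul0r.
rewrite h0 addr0 /ai (Mi_simplex hs (hzs s)).
rewrite (eq_bigr (fun _ => - (1 / (K - 1)))); last by move=> j hj; rewrite hzs hs.
rewrite sum_except_const; have := K1_neq0 => h1; by field.
Qed.

Lemma risk_ge m : (0 < m)%N ->
  (forall F : 'I_k -> R, \sum_(i < N) F (y i) = m%:R * \sum_(c < k) F c) ->
  - (K / (K - 1)) <= sm_risk y w z.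
Proof.
move=> hm hsum; rewrite (risk_formula hm hsum) lerBrDr addrC subrr.
apply: divr_ge0; last by apply: mulr_ge0 => //; have := K_gt1; lra.
apply: addr_ge0; first by apply: sumr_ge0 => i _; apply: addr_ge0; [apply: ai_ge0|apply: bi_ge0].
apply: divr_ge0; first by apply: mulr_ge0 => //; apply: dotp_ge0.
by have := K_gt1; lra.
Qed.

Lemma risk_eq_imp m : (0 < m)%N ->
  (forall F : 'I_k -> R, \sum_(i < N) F (y i) = m%:R * \sum_(c < k) F c) ->
  sm_risk y w z = - (K / (K - 1)) -> simplex /\ (forall s, z s = w (y s)).
Proof.
move=> hm hsum E.
have hm0 : 0 < m%:R :> R by rewrite ltr0n.
have hK := K_gt1.
rewrite (risk_formula hm hsum) in E.
set S := \sum_(i < N) (ai i + bi i) in E.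
set T := m%:R * dotp Wsum Wsum / (2 * (K - 1)) in E.
have hST : S + T = 0.
  have : (S + T) / (m%:R * K) = 0 by lra.
  move/eqP; rewrite mulf_eq0 invr_eq0 mulf_eq0 => /orP [/eqP //|/orP [] /eqP] h; lra.
have hS0 : 0 <= S by apply: sumr_ge0 => i _; apply: addr_ge0; [apply: ai_ge0|apply: bi_ge0].
have hT0 : 0 <= T.
  apply: divr_ge0; first by apply: mulr_ge0; [lra|apply: dotp_ge0].
  lra.
have hS : S = 0 by lra.
have hT : T = 0 by lra.
have hW : Wsum = 0.
  apply: dotp_eq0; move/eqP: hT; rewrite /T !mulf_eq0 invr_eq0 mulf_eq0.
  case/orP => [/orP [] /eqP h //|/orP [] /eqP h]; lra.
have hab : forall s, ai s = 0 /\ bi s = 0.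
  move=> s.
  have hF : forall i : 'I_N, predT i -> 0 <= ai i + bi i.
    by move=> i _; apply: addr_ge0; [apply: ai_ge0|apply: bi_ge0].
  have /= h := psumr_eq0P hF hS (i := s) isT.
  have := ai_ge0 s; have := bi_ge0 s => h1 h2; split; lra.
have hzs : forall s, z s = w (y s).
  move=> s; have [_ hb] := hab s.
  have hden : 2 * K * (K - 1) != 0.
    by rewrite !mulf_eq0 negb_or negb_or pnatr_eq0 K_neq0 K1_neq0.
  move/eqP: hb; rewrite /bi mulf_eq0 invr_eq0 (negbTE hden) orbF => /eqP hb.
  have := dotp_eq0 hb; rewrite /Vc hW sub0r.
  move/eqP; rewrite addrC -scalerBr scaler_eq0 => /orP [/eqP h|]; first by exfalso; lra'.
  by rewrite subr_eq0 => /eqP.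
split=> // i j hij.
have [s hs] : exists s, y s == i.
  case: (boolP [exists s, y s == i]) => [/existsP [s hs]|hno]; first by exists s.
  exfalso.
  have := hsum (fun c => (c == i)%:R).
  rewrite big1; last first.
    move=> s _; case: eqP => // hy; case/negP: hno; apply/existsP; exists s; exact/eqP.
  rewrite (bigD1 i) //= eqxx big1 ?addr0 ?mulr1; last by move=> c /negbTE ->.
  move=> h; lra'.
move/eqP: hs => hs.
have [ha _] := hab s.
have hM : Mi s = - (1 / (K - 1)).
  move: ha; rewrite /ai sum_except_dot hW dotp0l hzs hs.
  have := hw i; rewrite /on_sphere => -> h.
  have h1 := K1_neq0.
  have : Mi s = (0 - 1) / (K - 1) by lra'.
  by move=> ->; rewrite sub0r mulNr.
have hsum_eq : \sum_(j | j != y s) dotp (w j) (z s) = (K - 1) * max_except (y s) (fun j => dotp (w j) (z s)).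
  move: ha; rewrite /ai -/(Mi s) => h.
  have h1 := K1_neq0.
  have E2 : \sum_(j | j != y s) dotp (w j) (z s) = Mi s * (K - 1).
    have := h; move/eqP; rewrite subr_eq0 => /eqP ->; by field.
  by rewrite E2 mulrC.
have := sum_except_eq hsum_eq (j := j); rewrite hs eq_sym => /(_ hij).
move=> h; move: hM; rewrite /Mi hs -h hzs hs => <-; by rewrite dotpC.
Qed.

Lemma K_ge2 : 2 <= K.
Proof. by rewrite /K ler_nat. Qed.

Definition cmL := [seq dotp (w p.1) (w p.2) | p <- enum [pred q : 'I_k * 'I_k | q.1 != q.2]].

Lemma cmL_mem i j : i != j -> dotp (w i) (w j) \in cmL.
Proof. by move=> hij; apply/mapP; exists (i, j) => //; rewrite mem_enum inE /=. Qed.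

Lemma cmL_max : exists i j, i != j /\ maxseq cmL = dotp (w i) (w j).
Proof.
have c0 : 'I_k := Ordinal (ltnW hk).
have [j0 hj0] := exists_other c0 hk.
have : maxseq cmL \in cmL.
  apply: maxseq_mem; apply/eqP => E; have := cmL_mem hj0; by rewrite E.
by case/mapP => p; rewrite mem_enum inE => hp ->; exists p.1, p.2.
Qed.

Lemma cm_bounds : - (1 / (K - 1)) <= maxseq cmL /\ maxseq cmL <= 1.
Proof.
split; last first.
  have [i [j [hij ->]]] := cmL_max.
  by have /andP [_ h1] := dotp_unit_bound (hw i) (hw j).
have hM : forall a b, b != a -> dotp (w b) (w a) <= maxseq cmL.
  by move=> a b hab; apply: maxseq_ge; apply: cmL_mem.
have hle : \sum_(a < k) \sum_(b | b != a) dotp (w b) (w a) <= \sum_(a < k) \sum_(b | b != a) maxseq cmL.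
  by apply: ler_sum => a _; apply: ler_sum => b hb; apply: hM.
have E1 : \sum_(a < k) \sum_(b | b != a) dotp (w b) (w a) = dotp Wsum Wsum - K.
  rewrite (eq_bigr (fun a => dotp Wsum (w a) - 1)); last first.
    by move=> a _; rewrite sum_except_dot; have := hw a; rewrite /on_sphere => ->.
  rewrite sumrB sumr_const card_ord -/K; congr (_ - _).
  by rewrite [X in _ = dotp X _]/Wsum dotp_suml; apply: eq_bigr => a _; rewrite dotpC.
have E2 : \sum_(a < k) \sum_(b | b != a) maxseq cmL = K * ((K - 1) * maxseq cmL).
  rewrite (eq_bigr (fun a => (K - 1) * maxseq cmL)); last by move=> a _; rewrite sum_except_const.
  by rewrite sumr_const card_ord -mulr_natl.
rewrite E1 E2 in hle.
have hW := dotp_ge0 Wsum.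
have hK := K_ge2.
set M := maxseq cmL in hle *.
have h2 : -1 <= (K - 1) * M.
  have hK0 : 0 < K by lra.
  by rewrite -(ler_pM2l hK0) mulrN1; lra.
have hK1 : 0 < K - 1 by lra.
have -> : M = ((K - 1) * M) / (K - 1) by field; lra.
rewrite ler_pdivlMr //.
have -> : - (1 / (K - 1)) * (K - 1) = -1 by field; lra.
exact: h2.
Qed.

Lemma cm_le : class_margin w <= acos (- (1 / (K - 1))).
Proof.
have [h1 h2] := cm_bounds; rewrite /class_margin -/cmL.
have hK := K_ge2.
apply: acos_le => //.
have : 1 / (K - 1) <= 1 by rewrite ler_pdivrMr; lra.
lra.
Qed.

Lemma cm_eq : simplex -> class_margin w = acos (- (1 / (K - 1))).
Proof.
move=> hs; rewrite /class_margin -/cmL.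
by have [i [j [hij ->]]] := cmL_max; rewrite hs.
Qed.

Definition gL := [seq dotp (w (y i)) (z i) - max_except (y i) (fun j => dotp (w j) (z i)) | i <- enum 'I_N].

Lemma msm_le m : (0 < m)%N ->
  (forall F : 'I_k -> R, \sum_(i < N) F (y i) = m%:R * \sum_(c < k) F c) ->
  min_sample_margin y w z <= K / (K - 1).
Proof.
move=> hm hsum.
have hN : N%:R = m%:R * K :> R.
  have := hsum (fun _ => 1); rewrite !sumr_const !card_ord mulr_natl => <-.
  by rewrite -/K.
have hK := K_gt1.
have hN0 : 0 < N%:R :> R by rewrite hN; apply: mulr_gt0; [rewrite ltr0n|lra].
have hR := risk_ge hm hsum.
rewrite /min_sample_margin -/gL.
have hle : \sum_(i < N) minseq gL <= \sum_(i < N) - termi i.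
  apply: ler_sum => i _; apply: minseq_le; apply/mapP; exists i; first by rewrite mem_enum.
  by rewrite /termi /Mi; ring.
rewrite sumr_const card_ord sumrN -mulr_natl in hle.
have E : \sum_(i < N) termi i = N%:R * sm_risk y w z.
  have -> : sm_risk y w z = N%:R^-1 * \sum_(i < N) termi i by [].
  by rewrite mulrA divff ?mul1r // gt_eqF.
rewrite E in hle.
rewrite -(ler_pM2l hN0); apply: (le_trans hle).
rewrite -mulrN ler_pM2l //; lra.
Qed.

Lemma msm_eq : (0 < N)%N -> simplex -> (forall s, z s = w (y s)) ->
  min_sample_margin y w z = K / (K - 1).
Proof.
move=> hN hs hzs.
rewrite /min_sample_margin -/gL.
have : minseq gL \in gL.
  apply: minseq_mem; rewrite /gL; apply/eqP => E.
  have := size_map (fun i => dotp (w (y i)) (z i) - max_except (y i) (fun j => dotp (w j) (z i))) (enum 'I_N).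
  by rewrite E size_enum_ord /= => h; move: hN; rewrite -h.
case/mapP => s _ ->.
rewrite -/(Mi s) (Mi_simplex hs (hzs s)) hzs.
have := hw (y s); rewrite /on_sphere => ->.
have := K1_neq0 => h1; by field.
Qed.
End S3.
Section S5.
Variable R : realType.
Variables (d k : nat).
Hypothesis hk2 : (2 <= k)%N.
Hypothesis hkd : (k <= d.+1)%N.

Let n := k.-1.
Let hnd : (n <= d)%N.
Proof. by rewrite /n; case: (k) hkd. Qed.

Definition Ev (c : nat) : 'rV[R]_d := \row_(i < d) ((c == i)%:R).
Definition Av : 'rV[R]_d := \row_(i < d) ((i < n)%N%:R).

Lemma dEE c c' : (c < d)%N -> dotp (Ev c) (Ev c') = (c == c')%:R.
Proof.
move=> hc; rewrite /dotp (bigD1 (Ordinal hc)) //= big1 => [|i hi]; last first.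
  rewrite !mxE; have -> : (c == i) = false; last by rewrite mul0r.
  by apply/negbTE; apply: contra hi => /eqP h; apply/eqP; apply: val_inj.
by rewrite !mxE eqxx mul1r addr0 eq_sym.
Qed.

Lemma dEA c : (c < n)%N -> dotp (Ev c) Av = 1.
Proof.
move=> hc; have hc' : (c < d)%N by apply: leq_trans hnd.
rewrite /dotp (bigD1 (Ordinal hc')) //= big1 => [|i hi]; last first.
  rewrite !mxE; have -> : (c == i) = false; last by rewrite mul0r.
  by apply/negbTE; apply: contra hi => /eqP h; apply/eqP; apply: val_inj.
by rewrite !mxE eqxx hc mul1r addr0.
Qed.

Lemma dAA : dotp Av Av = n%:R.
Proof.
rewrite /dotp (eq_bigr (fun i : 'I_d => if (i < n)%N then 1 else 0)); last first.
  by move=> i _; rewrite !mxE; case: (i < n)%N; rewrite ?mulr1 ?mulr0.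
rewrite -big_mkcond /= -(big_ord_widen d (fun _ => (1 : R)) hnd).
by rewrite sumr_const card_ord.
Qed.

Let KK : R := k%:R.
Let hK1 : KK - 1 != 0.
Proof. rewrite /KK subr_eq0 pnatr_eq1; by case: (k) hk2 => [|[]]. Qed.
Let hK0 : KK != 0.
Proof. rewrite /KK pnatr_eq0; by case: (k) hk2. Qed.
Let hKpos : 0 < KK.
Proof. by rewrite /KK ltr0n; case: (k) hk2. Qed.
Let hK1pos : 0 < KK - 1.
Proof. rewrite /KK subr_gt0 ltr1n; by []. Qed.
Let hn : n%:R = KK - 1.
Proof. by rewrite /n /KK; case: (k) hk2 => // k' _; rewrite mulrSr addrK. Qed.

Definition gam : R := - (Num.sqrt KK)^-1.
Definition lam : R := Num.sqrt (KK / (KK - 1)).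
Definition bet : R := (1 + gam) / (KK - 1).

Lemma gam2 : gam ^+ 2 = 1 / KK.
Proof.
rewrite /gam sqrrN exprVn sqr_sqrtr ?mul1r //; exact: ltW.
Qed.

Lemma lam2 : lam * lam = KK / (KK - 1).
Proof. by rewrite -expr2 sqr_sqrtr // divr_ge0 // ltW. Qed.

Definition wsx (c : 'I_k) : 'rV[R]_d :=
  lam *: (if (c < n)%N then Ev c - bet *: Av else gam *: Av).

Lemma wsx_dot c c' : dotp (wsx c) (wsx c') =
  if c == c' then 1 else - (1 / (KK - 1)).
Proof.
rewrite /wsx dotpZl dotpZr mulrA lam2.
have hA : (k%:R - 1 != 0 :> R) := hK1.
have hB : (k%:R != 0 :> R) := hK0.
have hcn : forall c : 'I_k, ~~ (c < n)%N -> c = n :> nat.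
  move=> x; rewrite -leqNgt => h; apply/eqP; rewrite eqn_leq h andbT.
  by rewrite /n -ltnS (ltn_predK (ltn_ord x)).
case: (ltnP c n) => hc; case: (ltnP c' n) => hc'.
- rewrite !dotpBl !dotpBr !dotpZl !dotpZr dEE ?(leq_trans hc hnd) // dEA //.
  rewrite (dotpC Av) dEA // dAA hn.
  have -> : (val c == val c') = (c == c') by [].
  apply: (@eq_trans _ _ (KK / (KK - 1) * ((c == c')%:R + (gam ^+ 2 - 1) / (KK - 1)))).
    by rewrite /bet; field.
  rewrite gam2; case: (c == c') => /=; field; by rewrite ?hA ?hB.
- have -> : (c == c') = false.
    by apply/negbTE; apply/negP => /eqP E; move: hc; rewrite E ltnNge hc'.
  rewrite !dotpBl !dotpZl !dotpZr dEA // dAA hn.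
  apply: (@eq_trans _ _ (KK / (KK - 1) * (- gam ^+ 2))).
    by rewrite /bet; field.
  rewrite gam2; field; by rewrite ?hA ?hB.
- have -> : (c == c') = false.
    by apply/negbTE; apply/negP => /eqP E; move: hc'; rewrite -E ltnNge hc.
  rewrite !dotpBr !dotpZl !dotpZr (dotpC Av) dEA // dAA hn.
  apply: (@eq_trans _ _ (KK / (KK - 1) * (- gam ^+ 2))).
    by rewrite /bet; field.
  rewrite gam2; field; by rewrite ?hA ?hB.
- have e1 : val c = n by apply: hcn; rewrite -leqNgt.
  have e2 : val c' = n by apply: hcn; rewrite -leqNgt.
  have -> : c == c' by apply/eqP; apply: val_inj; rewrite /= e1 e2.
  rewrite !dotpZl !dotpZr dAA hn.
  apply: (@eq_trans _ _ (KK / (KK - 1) * (gam ^+ 2 * (KK - 1)))).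
    by ring.
  rewrite gam2; field; by rewrite ?hA ?hB.
Qed.

End S5.

Theorem theorem4 (R : realType) (d k N : nat) (y : 'I_N -> 'I_k) :
  (2 <= d)%N -> (2 <= k)%N -> (k <= d.+1)%N -> class_balanced y ->
  (* the bound -k/(k-1) is attained (so it is the minimum of R) *)
  (exists (w : 'I_k -> 'rV[R]_d) (z : 'I_N -> 'rV[R]_d),
      (forall c, on_sphere (w c)) /\ (forall i, on_sphere (z i)) /\
      sm_risk y w z = - (k%:R / (k%:R - 1))) /\
  forall (w : 'I_k -> 'rV[R]_d) (z : 'I_N -> 'rV[R]_d),
    (forall c, on_sphere (w c)) -> (forall i, on_sphere (z i)) ->
    [/\ sm_risk y w z >= - (k%:R / (k%:R - 1)),
        (sm_risk y w z = - (k%:R / (k%:R - 1)) <->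
          (forall i j : 'I_k, i != j -> dotp (w i) (w j) = - (1 / (k%:R - 1))) /\
          (forall i, z i = w (y i))),
        (sm_risk y w z = - (k%:R / (k%:R - 1)) ->
          class_margin w = acos (- (1 / (k%:R - 1))) /\
          min_sample_margin y w z = k%:R / (k%:R - 1)),
        class_margin w <= acos (- (1 / (k%:R - 1))) &
        min_sample_margin y w z <= k%:R / (k%:R - 1)].
Proof.
move=> hd hk hkd hbal.
have [m hm hsum] := @balanced_sum R k N y hbal.
have hN : (0 < N)%N.
  have := hsum (fun _ => 1); rewrite !sumr_const !card_ord => h.
  rewrite lt0n; apply/eqP => N0; move: h; rewrite N0 /= => h.
  have : (0 : R) < m%:R * (1 *+ k) by apply: mulr_gt0; rewrite ltr0n //; case: (k) hk.
  by rewrite -h ltxx.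
have hsimp : simplex (wsx R d (k := k)).
  move=> i j hij; rewrite (wsx_dot R hk hkd) (negbTE hij) //.
have hsph : forall c, on_sphere (wsx R d (k := k) c).
  by move=> c; rewrite /on_sphere (wsx_dot R hk hkd) eqxx.
split.
  exists (wsx R d (k := k)), (fun s => wsx R d (y s)); split => //; split => //.
  exact: (risk_eq_of hk hsph (fun s => hsph (y s)) hm hsum hsimp (fun s => erefl)).
move=> w z hw hz; split.
- exact: (risk_ge hk hw hz hm hsum).
- split; first exact: (risk_eq_imp hk hw hz hm hsum).
  by case=> hs hzs; exact: (risk_eq_of hk hw hz hm hsum hs hzs).
- move=> E; have [hs hzs] := risk_eq_imp hk hw hz hm hsum E.
  split; first exact: (cm_eq hk hs).
  exact: (msm_eq hk hw hN hs hzs).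
- exact: (cm_le hk hw).
- exact: (msm_le hk hw hz hm hsum).
Qed.
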